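(* Let $H\in\mathbb{R}^{n\times d}$ have rank $h$, let $\Sigma\in\mathbb{R}^{n\times n}$ be symmetric positive definite, let $y\in\mathbb{R}^n$, $J\ge2$, and let $v_0^{(1)},\dots,v_0^{(J)}\in\mathbb{R}^d$ be an initial ensemble. Run deterministic EKI: $$v_{i+1}^{(j)}=v_i^{(j)}+\Gamma_iH^\top(H\Gamma_iH^\top+\Sigma)^{-1}(y-Hv_i^{(j)}),$$ where $\Gamma_i$ is the empirical covariance of the ensemble at step $i$. Let $v^*=(H^\top\Sigma^{-1}H)^\dagger H^\top\Sigma^{-1}y$ and $\omega_i^{(j)}=v_i^{(j)}-v^*$, and let $\mathbb{P},\mathbb{Q},\mathbb{N}$ be the projectors defined in the context. Then for every particle $j=1,\dots,J$: (a) $\|\mathbb{P}\omega_i^{(j)}\|=\mathcal{O}(i^{-1/2})$ as $i\to\infty$; (b) $\mathbb{Q}\omega_i^{(j)}=\mathbb{Q}\omega_0^{(j)}$ for all $i\ge0$; (c) $\mathbb{N}\omega_i^{(j)}=\mathbb{N}\omega_0^{(j)}$ for all $i\ge0$.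
   Context: $\dagger$ is the Moore–Penrose pseudoinverse; $H^+:=(H^\top\Sigma^{-1}H)^\dagger H^\top\Sigma^{-1}$. Empirical covariance: $\Gamma_i=\frac{1}{J-1}\sum_{j}(v_i^{(j)}-\bar v_i)(v_i^{(j)}-\bar v_i)^\top$, $\bar v_i=\frac1J\sum_jv_i^{(j)}$. Let $r$ be the number of positive eigenvalues of the pencil $H\Gamma_0H^\top w=\delta\Sigma w$. Let $w_1,\dots,w_n$ be a basis of $\mathbb{R}^n$ with $w_k^\top\Sigma w_l$ equal to $1$ if $k=l$ and $0$ otherwise, such that each $w_\ell$ is a generalized eigenvector of $(H\Gamma_iH^\top,\Sigma)$ for every $i\ge0$ (with eigenvalue $\delta_{\ell,i}$); $w_1,\dots,w_r\in\mathsf{Ran}(\Sigma^{-1}H)$ correspond to positive eigenvalues; $w_{r+1},\dots,w_h\in\mathsf{Ran}(\Sigma^{-1}H)$ correspond to eigenvalue zero; $w_{h+1},\dots,w_n$ form a basis of $\mathsf{Ker}(H^\top)$. Define $u_\ell=\frac{1}{\delta_{\ell,0}}\Gamma_0H^\top w_\ell$ for $\ell\le r$ and $u_\ell=H^+\Sigma w_\ell$ for $r<\ell\le h$; let $U=[u_1,\dots,u_h]$, $U_{k:l}$ its columns $k$ through $l$. Define $\mathbb{P}=U_{1:r}U_{1:r}^\top H^\top\Sigma^{-1}H$, $\mathbb{Q}=U_{r+1:h}U_{r+1:h}^\top H^\top\Sigma^{-1}H$, $\mathbb{N}=I-\mathbb{P}-\mathbb{Q}$. *)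

(* Defs.v *)
From HB Require Import structures.
From mathcomp Require Import all_boot all_order all_algebra.
From mathcomp Require Import reals.
From Stdlib Require Import ClassicalEpsilon.

Set Implicit Arguments.
Unset Strict Implicit.
Unset Printing Implicit Defensive.

Import Order.TTheory GRing.Theory Num.Theory.
Local Open Scope ring_scope.

Section EKIDefs.
Variable R : realType.

Definition penrose m n (A : 'M[R]_(m, n)) (X : 'M[R]_(n, m)) : Prop :=
  [/\ A *m X *m A = A, X *m A *m X = X,
      (A *m X)^T = A *m X & (X *m A)^T = X *m A].

(* Moore--Penrose pseudoinverse: the (unique, existing) matrix satisfying
   the Penrose conditions. *)
Definition pinv m n (A : 'M[R]_(m, n)) : 'M[R]_(n, m) :=
  epsilon (inhabits 0) (penrose A).

Definition spd n (S : 'M[R]_n) : Prop :=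
  S^T = S /\ forall x : 'cV[R]_n, x != 0 -> 0 < (x^T *m S *m x) 0 0.

Definition vnorm n (x : 'cV[R]_n) : R := Num.sqrt (\sum_i (x i 0) ^+ 2).

Definition emp_mean J d (v : 'I_J -> 'cV[R]_d) : 'cV[R]_d :=
  (J%:R)^-1 *: \sum_j v j.

Definition emp_cov J d (v : 'I_J -> 'cV[R]_d) : 'M[R]_d :=
  ((J.-1)%:R)^-1 *:
    \sum_j ((v j - emp_mean v) *m (v j - emp_mean v)^T).

Section EKI.
Variables (n d J : nat) (H : 'M[R]_(n, d)) (Sigma : 'M[R]_n) (y : 'cV[R]_n).

Definition eki_step (v : 'I_J -> 'cV[R]_d) : 'I_J -> 'cV[R]_d :=
  fun j => v j + emp_cov v *m H^T *m
             invmx (H *m emp_cov v *m H^T + Sigma) *m (y - H *m v j).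

Fixpoint eki (v0 : 'I_J -> 'cV[R]_d) (i : nat) : 'I_J -> 'cV[R]_d :=
  match i with
  | 0 => v0
  | i'.+1 => eki_step (eki v0 i')
  end.

Definition Hplus : 'M[R]_(d, n) :=
  pinv (H^T *m invmx Sigma *m H) *m H^T *m invmx Sigma.

Definition vstar : 'cV[R]_d := Hplus *m y.

(* u_l for a given basis w, eigenvalues delta0 l = delta_{l,0},
   Gamma0 = initial empirical covariance, and r *)
Definition ucol (Gamma0 : 'M[R]_d) (w : 'I_n -> 'cV[R]_n) (delta0 : 'I_n -> R)
  (r : nat) (l : 'I_n) : 'cV[R]_d :=
  if (l < r)%N then (delta0 l)^-1 *: (Gamma0 *m H^T *m w l)
  else Hplus *m Sigma *m w l.

(* P = U_{1:r} U_{1:r}^T H^T Sigma^-1 H  (U U^T = sum of outer products of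
   the columns); indices are 0-based here: columns 0..r-1 *)
Definition Pmx Gamma0 w delta0 (r : nat) : 'M[R]_d :=
  (\sum_(l < n | (l < r)%N)
      (ucol Gamma0 w delta0 r l *m (ucol Gamma0 w delta0 r l)^T))
    *m H^T *m invmx Sigma *m H.

(* Q = U_{r+1:h} U_{r+1:h}^T H^T Sigma^-1 H  (0-based columns r..h-1) *)
Definition Qmx Gamma0 w delta0 (r h : nat) : 'M[R]_d :=
  (\sum_(l < n | (r <= l < h)%N)
      (ucol Gamma0 w delta0 r l *m (ucol Gamma0 w delta0 r l)^T))
    *m H^T *m invmx Sigma *m H.

Definition Nmx Gamma0 w delta0 (r h : nat) : 'M[R]_d :=
  1%:M - Pmx Gamma0 w delta0 r - Qmx Gamma0 w delta0 r h.

End EKI.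
End EKIDefs.

(* Main.v *)
Require Import Defs.
From HB Require Import structures.
From mathcomp Require Import all_boot all_order all_algebra.
From mathcomp Require Import reals.
From mathcomp Require Import ring lra.
From Stdlib Require Import ClassicalEpsilon.

Set Implicit Arguments.
Unset Strict Implicit.
Unset Printing Implicit Defensive.
Import Order.TTheory GRing.Theory Num.Theory.
Local Open Scope ring_scope.

Section Gen.
Variable R : realType.

Lemma mx_ext_cV m n (A B : 'M[R]_(m,n)) :
  (forall x : 'cV_n, A *m x = B *m x) -> A = B.
Proof.
move=> E; apply/matrixP => i j.
have := congr1 (fun M : 'cV_m => M i 0) (E (delta_mx j 0)).
by rewrite -!colE !mxE.
Qed.

Definition posdef n (S : 'M[R]_n) :=
  forall x : 'cV_n, x != 0 -> 0 < (x^T *m S *m x) 0 0.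

Lemma posdef_unit n (S : 'M[R]_n) : posdef S -> S \in unitmx.
Proof.
move=> pS; rewrite -unitmx_tr -row_free_unit; apply/inj_row_free => v Hv.
apply/eqP; apply/negPn/negP => nz.
have hx : v^T != 0.
  by apply: contra nz => /eqP h; rewrite -(trmxK v) h trmx0.
have := pS _ hx; rewrite -mulmxA.
have -> : S *m v^T = 0 by rewrite -[S]trmxK -trmx_mul Hv trmx0.
by rewrite mulmx0 mxE ltxx.
Qed.

Lemma posdef_zero n (S : 'M[R]_n) (x : 'cV_n) : posdef S ->
  (x^T *m S *m x) 0 0 = 0 -> x = 0.
Proof.
move=> pS h; apply/eqP; apply/negPn/negP => nz.
by have := pS _ nz; rewrite h ltxx.
Qed.

Lemma posdef_inv n (S : 'M[R]_n) : S^T = S -> posdef S -> posdef (invmx S).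
Proof.
move=> sS pS x nx.
have uS := posdef_unit pS.
set t := invmx S *m x.
have ex : x = S *m t by rewrite /t mulmxA mulmxV // mul1mx.
have nt : t != 0 by apply: contra nx => /eqP h; rewrite ex h mulmx0.
have := pS _ nt.
suff -> : x^T *m invmx S *m x = t^T *m S *m t by [].
rewrite {1}ex trmx_mul sS -!mulmxA; by [].
Qed.


Lemma emp_cov_tr J d (v : 'I_J -> 'cV[R]_d) : (emp_cov v)^T = emp_cov v.
Proof.
rewrite /emp_cov linearZ /= linear_sum /=; congr (_ *: _).
by apply: eq_bigr => j _; rewrite trmx_mul trmxK.
Qed.

Lemma emp_cov_quad J d (v : 'I_J -> 'cV[R]_d) (x : 'cV_d) :
  (x^T *m emp_cov v *m x) 0 0 =
  ((J.-1)%:R)^-1 * \sum_j ((x^T *m (v j - emp_mean v)) 0 0) ^+ 2.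
Proof.
rewrite /emp_cov -scalemxAr -scalemxAl mxE; congr (_ * _).
rewrite mulmx_sumr mulmx_suml summxE; apply: eq_bigr => j _.
set e := v j - emp_mean v.
rewrite mulmxA [x^T *m e]mx11_scalar mul_scalar_mx -scalemxAl mxE.
have -> : e^T *m x = (x^T *m e)^T by rewrite trmx_mul trmxK.
by rewrite [((x^T *m e)^T) 0 0]mxE [(_%:M) 0 0]mxE eqxx mulr1n expr2.
Qed.

Lemma emp_cov_psd J d (v : 'I_J -> 'cV[R]_d) (x : 'cV_d) :
  0 <= (x^T *m emp_cov v *m x) 0 0.
Proof.
rewrite emp_cov_quad; apply: mulr_ge0; first by rewrite invr_ge0 ler0n.
by apply: sumr_ge0 => j _; apply: sqr_ge0.
Qed.

Lemma emp_cov_zero J d (v : 'I_J -> 'cV[R]_d) (x : 'cV_d) :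
  (x^T *m emp_cov v *m x) 0 0 = 0 -> emp_cov v *m x = 0.
Proof.
rewrite emp_cov_quad => /eqP; rewrite mulf_eq0 => /orP [/eqP c0|/eqP s0].
  by rewrite /emp_cov c0 scale0r mul0mx.
have z : forall j, (x^T *m (v j - emp_mean v)) 0 0 = 0.
  move=> j; apply/eqP; rewrite -sqrf_eq0; apply/eqP.
  by apply: (psumr_eq0P _ s0) => // k _; apply: sqr_ge0.
rewrite /emp_cov -scalemxAl mulmx_suml.
rewrite big1 ?scaler0 // => j _.
set e := v j - emp_mean v.
rewrite -mulmxA.
have -> : e^T *m x = (x^T *m e)^T by rewrite trmx_mul trmxK.
by rewrite [x^T *m e]mx11_scalar z tr_scalar_mx mul_mx_scalar scale0r.
Qed.

Lemma emp_cov_affine J d (v v' : 'I_J -> 'cV[R]_d) (M : 'M_d) (c : 'cV_d) :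
  (0 < J)%N -> (forall j, v' j = M *m v j + c) ->
  emp_cov v' = M *m emp_cov v *m M^T.
Proof.
move=> J0 hv.
have hm : emp_mean v' = M *m emp_mean v + c.
  rewrite /emp_mean (eq_bigr _ (fun j _ => hv j)) big_split /= sumr_const card_ord.
  rewrite scalerDr -mulmx_sumr scalemxAr; congr (_ + _).
  by rewrite -scaler_nat scalerA mulVf ?scale1r // pnatr_eq0 -lt0n.
rewrite /emp_cov -scalemxAr -scalemxAl; congr (_ *: _).
rewrite mulmx_sumr mulmx_suml; apply: eq_bigr => j _.
have -> : v' j - emp_mean v' = M *m (v j - emp_mean v).
  by rewrite hv hm mulmxBr opprD addrACA subrr addr0.
by rewrite trmx_mul !mulmxA.
Qed.

Lemma gram_unit k p (C : 'M[R]_(k,p)) : row_free C -> C *m C^T \in unitmx.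
Proof.
move=> fC; rewrite -row_free_unit; apply/inj_row_free => v Hv.
have e : ((v *m C) *m (v *m C)^T) 0 0 = 0.
  by rewrite trmx_mul mulmxA -(mulmxA v) Hv mul0mx mxE.
have h0 : v *m C = 0.
  apply/matrixP => i j; rewrite (ord1 i) [RHS]mxE.
  move: e; rewrite mxE => e.
  have e' : \sum_l ((v *m C) 0 l) ^+ 2 = 0.
    by apply: etrans e; apply: eq_bigr => l _; rewrite [(_^T) l 0]mxE expr2.
  apply/eqP; rewrite -sqrf_eq0; apply/eqP.
  by apply: (psumr_eq0P _ e') => // l _; apply: sqr_ge0.
by apply: (row_free_inj fC); rewrite h0 mul0mx.
Qed.

Lemma pinv_exists_aux m p k (B : 'M[R]_(m,k)) (C : 'M[R]_(k,p)) :
  C *m C^T \in unitmx -> B^T *m B \in unitmx ->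
  exists X, penrose (B *m C) X.
Proof.
move=> uC uB.
set UC := invmx (C *m C^T); set UB := invmx (B^T *m B).
have hC : forall q (Z : 'M_(q, k)), Z *m C *m C^T *m UC = Z.
  by move=> q Z; rewrite -!mulmxA (mulmxA C) mulmxV // mulmx1.
have hB : forall q (Z : 'M_(q, k)), Z *m UB *m B^T *m B = Z.
  by move=> q Z; rewrite -!mulmxA mulVmx // mulmx1.
exists (C^T *m UC *m UB *m B^T).
have AX : B *m C *m (C^T *m UC *m UB *m B^T) = B *m UB *m B^T by rewrite !mulmxA hC.
have XA : C^T *m UC *m UB *m B^T *m (B *m C) = C^T *m UC *m C by rewrite !mulmxA hB.
split.
- by rewrite AX !mulmxA hB.
- by rewrite XA !mulmxA hC.
- by rewrite AX !trmx_mul trmxK trmx_inv trmx_mul trmxK !mulmxA.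
- by rewrite XA !trmx_mul trmxK trmx_inv trmx_mul trmxK !mulmxA.
Qed.

Lemma pinv_exists m p (A : 'M[R]_(m,p)) : exists X, penrose A X.
Proof.
have fBt : row_free (col_base A)^T.
  by rewrite /row_free mxrank_tr; exact: col_base_full.
have uB : (col_base A)^T *m col_base A \in unitmx.
  by have := gram_unit fBt; rewrite trmxK.
have := pinv_exists_aux (gram_unit (row_base_free A)) uB.
by rewrite mulmx_base.
Qed.

Lemma pinv_spec m p (A : 'M[R]_(m,p)) : penrose A (pinv A).
Proof. exact: (epsilon_spec (inhabits 0) (penrose A) (pinv_exists A)). Qed.

Lemma sumsq_le (I : Type) (s : seq I) (F : I -> R) : (forall i, 0 <= F i) ->
  \sum_(i <- s) F i ^+ 2 <= (\sum_(i <- s) F i) ^+ 2.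
Proof.
move=> F0; elim: s => [|a s IH]; first by rewrite !big_nil expr0n.
rewrite !big_cons.
have S0 : 0 <= \sum_(i <- s) F i by apply: sumr_ge0.
have := F0 a; nra.
Qed.

Lemma vnorm_le1 n (x : 'cV[R]_n) : vnorm x <= \sum_i `|x i 0|.
Proof.
rewrite /vnorm -(ger0_norm (sumr_ge0 _ (fun i _ => normr_ge0 (x i 0)))).
rewrite -sqrtr_sqr; apply: ler_wsqrtr.
have := @sumsq_le _ (index_enum 'I_n) (fun i => `|x i 0|) (fun i => normr_ge0 _).
by rewrite (eq_bigr _ (fun i _ => real_normK (num_real (x i 0)))).
Qed.

Lemma seq_bound (a dl : nat -> R) : 0 < dl 0%N ->
  (forall i, dl i.+1 = dl i / (1 + dl i) ^+ 2) ->
  (forall i, a i.+1 = a i / (1 + dl i)) ->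
  forall i, (0 < i)%N ->
  `|a i| <= Num.sqrt (a 0%N ^+ 2 / dl 0%N) / Num.sqrt i%:R.
Proof.
move=> d0 Hd Ha.
have inv : forall i, [/\ 0 < dl i, a i ^+ 2 * dl 0%N = a 0%N ^+ 2 * dl i
                      & 2 * i%:R * dl i <= 1].
  elim=> [|i [p e b]]; first by split => //; rewrite mulr0 mul0r ler01.
  have p1 : 0 < 1 + dl i by rewrite addr_gt0.
  split.
  - by rewrite Hd divr_gt0 // exprn_gt0.
  - by rewrite Ha Hd expr_div_n mulrAC e mulrA.
  - rewrite Hd mulrA ler_pdivrMr ?exprn_gt0 // mul1r -natr1.
    nra.
move=> i i0.
have [p e b] := inv i.
have si : 0 < Num.sqrt (i%:R : R) by rewrite sqrtr_gt0 ltr0n.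
rewrite ler_pdivlMr // -sqrtr_sqr -sqrtrM ?sqr_ge0 //; apply: ler_wsqrtr.
have -> : a i ^+ 2 = a 0%N ^+ 2 / dl 0%N * dl i.
  by rewrite mulrAC -e mulfK // gt_eqF.
have c0 : 0 <= a 0%N ^+ 2 / dl 0%N by rewrite divr_ge0 ?sqr_ge0 // ltW.
have : 0 <= i%:R :> R by rewrite ler0n.
nra.
Qed.

End Gen.

Section Main.
Variables (R : realType) (n d J h r : nat)
  (H : 'M[R]_(n, d)) (Sigma : 'M[R]_n) (y : 'cV[R]_n)
  (v0 : 'I_J -> 'cV[R]_d)
  (w : 'I_n -> 'cV[R]_n) (delta : 'I_n -> nat -> R).
Hypotheses (hS : spd Sigma) (hJ : (2 <= J)%N)
  (hw : forall k l : 'I_n, ((w k)^T *m Sigma *m w l) 0 0 = (k == l)%:R)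
  (heig : forall (l : 'I_n) (i : nat),
      H *m emp_cov (eki H Sigma y v0 i) *m H^T *m w l
      = delta l i *: (Sigma *m w l))
  (hpos : forall l : 'I_n, (l < r)%N -> 0 < delta l 0)
  (hzero : forall l : 'I_n, (r <= l < h)%N -> delta l 0 = 0)
  (hran : forall l : 'I_n, (l < h)%N ->
      exists x : 'cV[R]_d, w l = invmx Sigma *m H *m x)
  (hker : forall l : 'I_n, (h <= l)%N -> H^T *m w l = 0).

Local Notation G i := (emp_cov (eki H Sigma y v0 i)).
Local Notation S i := (H *m G i *m H^T + Sigma).
Local Notation K i := (G i *m H^T *m invmx (S i)).
Local Notation g l := (H^T *m w l).
Local Notation Si := (invmx Sigma).

Lemma scal0 m : (0 : R)%:M = 0 :> 'M[R]_m.
Proof. by apply/matrixP => i j; rewrite !mxE mul0rn. Qed.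

Lemma Sig_sym : Sigma^T = Sigma. Proof. by case: hS. Qed.
Lemma Sig_pd : posdef Sigma. Proof. by case: hS. Qed.
Lemma Sig_unit : Sigma \in unitmx. Proof. exact: posdef_unit Sig_pd. Qed.
Lemma Si_sym : Si^T = Si. Proof. by rewrite trmx_inv Sig_sym. Qed.
Lemma SSi : Sigma *m Si = 1%:M. Proof. exact: mulmxV Sig_unit. Qed.
Lemma SiS : Si *m Sigma = 1%:M. Proof. exact: mulVmx Sig_unit. Qed.
Lemma Si_pd : posdef Si. Proof. exact: posdef_inv Sig_sym Sig_pd. Qed.

Lemma G_sym i : (G i)^T = G i. Proof. exact: emp_cov_tr. Qed.

Lemma delta_eq l i : delta l i = ((g l)^T *m G i *m g l) 0 0.
Proof.
have e := heig l i.
have : ((w l)^T *m (H *m G i *m H^T *m w l)) 0 0 = delta l i.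
  by rewrite e -scalemxAr mxE mulmxA hw eqxx mulr1.
move=> <-; by rewrite trmx_mul trmxK !mulmxA.
Qed.

Lemma delta_ge0 l i : 0 <= delta l i.
Proof. by rewrite delta_eq emp_cov_psd. Qed.

Lemma one_delta_neq0 l i : 1 + delta l i != 0.
Proof. have := delta_ge0 l i => hd; apply/eqP => e; lra. Qed.

Lemma S_pd i : posdef (S i).
Proof.
move=> x nx; rewrite mulmxDr mulmxDl mxE.
have -> : x^T *m (H *m G i *m H^T) *m x = (H^T *m x)^T *m G i *m (H^T *m x).
  by rewrite trmx_mul trmxK !mulmxA.
have := Sig_pd nx; have := emp_cov_psd (eki H Sigma y v0 i) (H^T *m x); lra.
Qed.

Lemma S_unit i : S i \in unitmx. Proof. exact: posdef_unit (S_pd i). Qed.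

Lemma S_sym i : (S i)^T = S i.
Proof. by rewrite linearD /= !trmx_mul trmxK G_sym Sig_sym mulmxA. Qed.

Lemma S_w i l : S i *m w l = (1 + delta l i) *: (Sigma *m w l).
Proof. by rewrite mulmxDl heig scalerDl scale1r addrC. Qed.

Lemma Sinv_Sw i l : invmx (S i) *m (Sigma *m w l) = (1 + delta l i)^-1 *: w l.
Proof.
rewrite -[w l in RHS](mulKmx (S_unit i)) S_w -(scalemxAr _ (invmx _)) scalerA mulVf ?scale1r //.
exact: one_delta_neq0.
Qed.

Lemma K_Sw i l : K i *m (Sigma *m w l) = (1 + delta l i)^-1 *: (G i *m g l).
Proof. by rewrite -mulmxA Sinv_Sw -scalemxAr -mulmxA. Qed.

Lemma KT i : (K i)^T = invmx (S i) *m H *m G i.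
Proof. by rewrite !trmx_mul trmx_inv S_sym trmxK G_sym mulmxA. Qed.

Lemma KT_g i l : (K i)^T *m g l = (delta l i / (1 + delta l i)) *: w l.
Proof.
rewrite KT.
have -> : invmx (S i) *m H *m G i *m g l
        = invmx (S i) *m (H *m G i *m H^T *m w l) by rewrite !mulmxA.
by rewrite heig -scalemxAr Sinv_Sw scalerA.
Qed.

Lemma eki_S i j : eki H Sigma y v0 i.+1 j
  = eki H Sigma y v0 i j + K i *m (y - H *m eki H Sigma y v0 i j).
Proof. by []. Qed.

Lemma G_S i : G i.+1 = (1%:M - K i *m H) *m G i *m (1%:M - K i *m H)^T.
Proof.
apply: (@emp_cov_affine _ _ _ _ _ _ (K i *m y)).
  by apply: leq_trans hJ.
move=> j; rewrite eki_S mulmxBr mulmxBl mul1mx !mulmxA.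
by rewrite addrCA addrC.
Qed.

Lemma G_S_g i l : G i.+1 *m g l = ((1 + delta l i) ^+ 2)^-1 *: (G i *m g l).
Proof.
have nz := one_delta_neq0 l i.
rewrite G_S.
have h1 : (1%:M - K i *m H)^T *m g l = (1 + delta l i)^-1 *: g l.
  rewrite linearB /= trmx1 trmx_mul mulmxBl mul1mx -(mulmxA H^T) KT_g -scalemxAr.
  rewrite -{1}[g l]scale1r -scalerBl; congr (_ *: _); field; exact: nz.
have h2 : (1%:M - K i *m H) *m (G i *m g l) = (1 + delta l i)^-1 *: (G i *m g l).
  rewrite mulmxBl mul1mx.
  have -> : K i *m H *m (G i *m g l) = K i *m (H *m G i *m H^T *m w l).
    by rewrite !mulmxA.
  rewrite heig -scalemxAr K_Sw scalerA.
  rewrite -{1}[G i *m g l]scale1r -scalerBl; congr (_ *: _); field; exact: nz.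
have -> : (1%:M - K i *m H) *m G i *m (1%:M - K i *m H)^T *m g l
   = (1%:M - K i *m H) *m (G i *m ((1%:M - K i *m H)^T *m g l)) by rewrite !mulmxA.
rewrite h1 -(scalemxAr _ (G i)) -(scalemxAr _ (1%:M - _)) h2 scalerA -invfM -expr2 //.
Qed.

Lemma Gg_scal i l : exists c : R, G i *m g l = c *: (G 0%N *m g l).
Proof.
elim: i => [|i [c e]]; first by exists 1; rewrite scale1r.
by exists (((1 + delta l i) ^+ 2)^-1 * c); rewrite G_S_g e scalerA.
Qed.

Lemma delta_S l i : delta l i.+1 = delta l i / (1 + delta l i) ^+ 2.
Proof.
rewrite [LHS]delta_eq -mulmxA G_S_g -(scalemxAr _ (g l)^T) mxE (mulmxA (g l)^T (G i)) -delta_eq mulrC //.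

Qed.

Local Notation A := (H^T *m invmx Sigma *m H).
Local Notation X := (pinv (H^T *m invmx Sigma *m H)).
Local Notation vs := (vstar H Sigma y).

Lemma A_sym : A^T = A.
Proof. by rewrite !trmx_mul trmxK Si_sym mulmxA. Qed.

Lemma HXA (Y : 'M[R]_d) : A *m Y *m A = A -> H *m Y *m A = H.
Proof.
move=> e; apply: mx_ext_cV => x.
have [m em] : exists m, m = (H *m Y *m A - H) *m x by eexists.
have h1 : H^T *m (Si *m m) = 0.
  have -> : H^T *m (Si *m m) = (A *m Y *m A - A) *m x.
    by rewrite em !mulmxA mulmxBr !mulmxBl !mulmxA.
  by rewrite e subrr mul0mx.
have h2 : (m^T *m Si *m m) 0 0 = 0.
  have mT : m^T = x^T *m (A *m Y^T *m H^T - H^T).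
    by rewrite em trmx_mul linearB /= (trmx_mul (H *m Y) A) A_sym trmx_mul mulmxA.
  rewrite -mulmxA mT -mulmxA mulmxBl -(mulmxA (A *m Y^T)) h1 mulmx0 sub0r.
  by rewrite oppr0 mulmx0 mxE.
have := posdef_zero Si_pd h2; rewrite em mulmxBl => /eqP.
by rewrite subr_eq0 => /eqP.
Qed.

Lemma AXH (Y : 'M[R]_d) : A *m Y *m A = A -> A *m Y *m H^T = H^T.
Proof.
move=> e.
have e' : A *m Y^T *m A = A.
  by have := congr1 trmx e; rewrite trmx_mul A_sym trmx_mul A_sym mulmxA.
by have := congr1 trmx (HXA e'); rewrite trmx_mul A_sym trmx_mul trmxK mulmxA.
Qed.

Lemma XAX : A *m X *m A = A.
Proof. by case: (pinv_spec (H^T *m invmx Sigma *m H)). Qed.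

Lemma HHplus (l : 'I_n) : (l < h)%N ->
  H *m Hplus H Sigma *m (Sigma *m w l) = Sigma *m w l.
Proof.
move=> lh; case: (hran lh) => x ->.
have -> : Sigma *m (Si *m H *m x) = H *m x by rewrite !mulmxA SSi mul1mx.
have E := congr1 (mulmx^~ x) (HXA XAX).
by move: E; rewrite /Hplus /= !mulmxA.
Qed.

Lemma V1 : H^T *m Si *m (y - H *m vs) = 0.
Proof.
rewrite /vstar /Hplus mulmxBr !mulmxA (AXH XAX) subrr //.
Qed.

Lemma K_vstar i : K i *m (y - H *m vs) = 0.
Proof.
have [z ez] : exists z, z = y - H *m vs by eexists.
rewrite -ez.
have ht : H^T *m (Si *m z) = 0 by rewrite mulmxA ez V1.
have St : S i *m (Si *m z) = z.
  by rewrite mulmxDl -mulmxA ht mulmx0 add0r mulmxA SSi mul1mx.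
by rewrite -{1}St -mulmxA mulKmx ?S_unit // -mulmxA ht mulmx0.
Qed.

Lemma omega_S i j :
  eki H Sigma y v0 i.+1 j - vs
  = (eki H Sigma y v0 i j - vs) - K i *m H *m (eki H Sigma y v0 i j - vs).
Proof.
set v := eki H Sigma y v0 i j.
rewrite eki_S -/v.
have -> : y - H *m v = (y - H *m vs) - H *m (v - vs).
  by rewrite mulmxBr opprB addrA subrK.
by rewrite mulmxBr K_vstar sub0r mulmxA addrAC.
Qed.

Local Notation G0 := (emp_cov v0).
Local Notation u l := (ucol H Sigma G0 w (fun l => delta l 0) r l).
Local Notation Pm := (Pmx H Sigma G0 w (fun l => delta l 0) r).
Local Notation Qm := (Qmx H Sigma G0 w (fun l => delta l 0) r h).
Local Notation Nm := (Nmx H Sigma G0 w (fun l => delta l 0) r h).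

Lemma heig0 l : H *m G0 *m H^T *m w l = delta l 0 *: (Sigma *m w l).
Proof. exact: heig l 0. Qed.

Lemma u_lt (l : 'I_n) : (l < r)%N -> u l = (delta l 0)^-1 *: (G0 *m g l).
Proof. by move=> lr; rewrite /ucol lr mulmxA. Qed.

Lemma u_ge (l : 'I_n) : (r <= l)%N -> u l = Hplus H Sigma *m Sigma *m w l.
Proof. by move=> lr; rewrite /ucol ltnNge lr. Qed.

Lemma Hu (l : 'I_n) : (l < r)%N -> H *m u l = Sigma *m w l.
Proof.
move=> lr; rewrite u_lt // -(scalemxAr _ H) !mulmxA heig0 scalerA mulVf ?scale1r //.
by rewrite gt_eqF // hpos.
Qed.

Lemma wSw (k l : 'I_n) : (w k)^T *m Sigma *m w l = (k == l)%:R%:M.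
Proof. by rewrite [LHS]mx11_scalar hw. Qed.

Lemma P_apply x : Pm *m x =
  \sum_(k < n | (k < r)%N) ((w k)^T *m H *m x) 0 0 *: u k.
Proof.
rewrite /Pmx -!mulmxA mulmx_suml; apply: eq_bigr => k kr.
have e : (u k)^T *m (H^T *m (Si *m (H *m x))) = (w k)^T *m H *m x.
  rewrite mulmxA -trmx_mul Hu // trmx_mul Sig_sym -(mulmxA (w k)^T Sigma) (mulmxA Sigma) SSi.
  by rewrite mul1mx mulmxA.
by rewrite -(mulmxA (u k)) e -mul_mx_scalar -mx11_scalar.
Qed.

Lemma P_u (l : 'I_n) : (l < r)%N -> Pm *m u l = u l.
Proof.
move=> lr; rewrite P_apply (bigD1 l) //= big1 ?addr0.
  by rewrite -mulmxA Hu // mulmxA hw eqxx scale1r.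
move=> k /andP [kr nk].
by rewrite -mulmxA Hu // mulmxA hw (negbTE nk) scale0r.
Qed.

Lemma Q_u (l : 'I_n) : (l < r)%N -> Qm *m u l = 0.
Proof.
move=> lr; rewrite /Qmx -!mulmxA mulmx_suml big1 // => k /andP [rk kh].
have Huk : H *m u k = Sigma *m w k.
  by rewrite u_ge // -mulmxA mulmxA HHplus.
have nk : (k == l) = false.
  by apply/negbTE; apply/eqP => e; move: rk; rewrite e leqNgt lr.
have : (u k)^T *m (H^T *m (Si *m (H *m u l))) = 0.
  rewrite Hu // (mulmxA Si) SiS mul1mx mulmxA -trmx_mul Huk trmx_mul Sig_sym.
  by rewrite wSw nk scal0.
by rewrite -mulmxA => ->; rewrite mulmx0.
Qed.

Lemma N_u (l : 'I_n) : (l < r)%N -> Nm *m u l = 0.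
Proof.
by move=> lr; rewrite /Nmx !mulmxBl mul1mx P_u // Q_u // subrr subr0.
Qed.

Lemma G0g (l : 'I_n) : (r <= l)%N -> G0 *m g l = 0.
Proof.
move=> rl; case: (ltnP l h) => lh; last by rewrite hker // mulmx0.
apply: emp_cov_zero.
by move: (delta_eq l 0) => /= <-; rewrite hzero // rl lh.
Qed.

Lemma QN_G0g (l : 'I_n) : Qm *m (G0 *m g l) = 0 /\ Nm *m (G0 *m g l) = 0.
Proof.
case: (ltnP l r) => lr; last by rewrite G0g // !mulmx0.
have -> : G0 *m g l = delta l 0 *: u l.
  by rewrite u_lt // scalerA divff ?scale1r // gt_eqF // hpos.
by rewrite -!scalemxAr Q_u // N_u // scaler0.
Qed.

Lemma basis_zero p (B : 'M[R]_(p, n)) :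
  (forall l, B *m (Sigma *m w l) = 0) -> B = 0.
Proof.
move=> hB.
pose W := \matrix_(a, l) w l a 0.
have WSW : W^T *m Sigma *m W = 1%:M.
  apply/matrixP => k l; rewrite [RHS]mxE -hw !mxE; apply: eq_bigr => b _.
  rewrite !mxE; congr (_ * _); apply: eq_bigr => a _; rewrite !mxE //.
have WW : Sigma *m W *m W^T = 1%:M.
  by have := congr1 trmx (mulmx1C WSW); rewrite !trmx_mul trmxK Sig_sym trmx1.
have BSW : B *m Sigma *m W = 0.
  apply/matrixP => a l; have e := congr1 (fun M : 'cV[R]_p => M a 0) (hB l).
  rewrite /= mulmxA [RHS]mxE in e; rewrite [RHS]mxE -e [LHS]mxE [in RHS]mxE.
  by apply: eq_bigr => b _; rewrite [W b l]mxE.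
by rewrite -[B]mulmx1 -WW !mulmxA BSW !mul0mx.
Qed.

Lemma QN_K i : Qm *m K i = 0 /\ Nm *m K i = 0.
Proof.
split; apply: basis_zero => l; have [c ec] := Gg_scal i l.
- by rewrite -mulmxA K_Sw ec scalerA -scalemxAr (QN_G0g l).1 scaler0.
- by rewrite -mulmxA K_Sw ec scalerA -scalemxAr (QN_G0g l).2 scaler0.
Qed.

Lemma Q_omega j i : Qm *m (eki H Sigma y v0 i j - vs)
  = Qm *m (eki H Sigma y v0 0 j - vs).
Proof.
elim: i => // i IH; rewrite eki_S -IH addrAC mulmxDr mulmxA (QN_K i).1.
by rewrite mul0mx addr0.
Qed.

Lemma N_omega j i : Nm *m (eki H Sigma y v0 i j - vs)
  = Nm *m (eki H Sigma y v0 0 j - vs).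
Proof.
elim: i => // i IH; rewrite eki_S -IH addrAC mulmxDr mulmxA (QN_K i).2.
by rewrite mul0mx addr0.
Qed.

Lemma a_step (k : 'I_n) i j :
  (w k)^T *m H *m (eki H Sigma y v0 i.+1 j - vs)
  = (1 + delta k i)^-1 *: ((w k)^T *m H *m (eki H Sigma y v0 i j - vs)).
Proof.
have E : (w k)^T *m H *m K i = (delta k i / (1 + delta k i)) *: (w k)^T.
  have := congr1 trmx (KT_g i k); rewrite trmx_mul trmxK trmx_mul trmxK => ->.
  by rewrite linearZ.
set om := eki H Sigma y v0 i j - vs.
rewrite omega_S -/om mulmxBr.
have -> : (w k)^T *m H *m (K i *m H *m om)
    = (delta k i / (1 + delta k i)) *: ((w k)^T *m H *m om).
  by rewrite (mulmxA _ (K i *m H)) (mulmxA _ (K i)) E -!scalemxAl.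
rewrite -{1}[(w k)^T *m H *m om]scale1r -scalerBl; congr (_ *: _).
by field; exact: one_delta_neq0.
Qed.

Lemma a_entry (k : 'I_n) j i :
  ((w k)^T *m H *m (eki H Sigma y v0 i.+1 j - vs)) 0 0
  = ((w k)^T *m H *m (eki H Sigma y v0 i j - vs)) 0 0 / (1 + delta k i).
Proof. by rewrite a_step mxE mulrC. Qed.

Lemma P_bound j : exists C : R, exists i0 : nat, forall i : nat, (i0 <= i)%N ->
  vnorm (Pm *m (eki H Sigma y v0 i j - vs)) <= C / Num.sqrt (i%:R).
Proof.
pose a k i := ((w k)^T *m H *m (eki H Sigma y v0 i j - vs)) 0 0.
pose M k := Num.sqrt (a k 0%N ^+ 2 / delta k 0%N).
have bnd : forall k : 'I_n, (k < r)%N -> forall i, (0 < i)%N ->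
    `|a k i| <= M k / Num.sqrt (i%:R : R).
  move=> k kr; apply: seq_bound; first exact: hpos.
    by move=> i; exact: delta_S.
  by move=> i; exact: a_entry.
exists (\sum_b \sum_(k < n | (k < r)%N) M k * `|u k b 0|), 1%N => i i1.
apply: le_trans (vnorm_le1 _) _.
rewrite mulr_suml; apply: ler_sum => b _.
rewrite P_apply summxE mulr_suml.
apply: le_trans (ler_norm_sum _ _ _) _.
apply: ler_sum => k kr.
rewrite mxE normrM mulrAC; apply: ler_wpM2r => //; exact: bnd.
Qed.

End Main.

Unset Implicit Arguments.
Set Strict Implicit.

Theorem theorem3p16 (R : realType) (n d J h r : nat)
  (H : 'M[R]_(n, d)) (Sigma : 'M[R]_n) (y : 'cV[R]_n)
  (v0 : 'I_J -> 'cV[R]_d)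
  (w : 'I_n -> 'cV[R]_n) (delta : 'I_n -> nat -> R) :
  \rank H = h ->
  spd Sigma ->
  (2 <= J)%N ->
  (* w is Sigma-orthonormal (hence a basis of R^n) *)
  (forall k l : 'I_n, ((w k)^T *m Sigma *m w l) 0 0 = (k == l)%:R) ->
  (* each w_l is a generalized eigenvector of (H Gamma_i H^T, Sigma)
     for every i, with eigenvalue delta l i *)
  (forall (l : 'I_n) (i : nat),
      H *m emp_cov (eki H Sigma y v0 i) *m H^T *m w l
      = delta l i *: (Sigma *m w l)) ->
  (r <= h)%N ->
  (* w_0..w_{r-1}: positive eigenvalues of the pencil at i = 0 *)
  (forall l : 'I_n, (l < r)%N -> 0 < delta l 0) ->
  (* w_r..w_{h-1}: eigenvalue zero *)
  (forall l : 'I_n, (r <= l < h)%N -> delta l 0 = 0) ->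
  (* w_0..w_{h-1} lie in Ran(Sigma^-1 H) *)
  (forall l : 'I_n, (l < h)%N ->
      exists x : 'cV[R]_d, w l = invmx Sigma *m H *m x) ->
  (* w_h..w_{n-1} lie in Ker(H^T) *)
  (forall l : 'I_n, (h <= l)%N -> H^T *m w l = 0) ->
  let Gamma0 := emp_cov v0 in
  let omega (i : nat) (j : 'I_J) := eki H Sigma y v0 i j - vstar H Sigma y in
  let P := Pmx H Sigma Gamma0 w (fun l => delta l 0) r in
  let Q := Qmx H Sigma Gamma0 w (fun l => delta l 0) r h in
  let N := Nmx H Sigma Gamma0 w (fun l => delta l 0) r h in
  (forall j : 'I_J, exists C : R, exists i0 : nat, forall i : nat, (i0 <= i)%N ->
       vnorm (P *m omega i j) <= C / Num.sqrt (i%:R)) /\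
  (forall (j : 'I_J) (i : nat), Q *m omega i j = Q *m omega 0%N j) /\
  (forall (j : 'I_J) (i : nat), N *m omega i j = N *m omega 0%N j).
Proof.
move=> hrank hS hJ hw heig hrh hpos hzero hran hker Gamma0 omega P Q N.
split; [|split].
- by move=> j; apply: P_bound.
- by move=> j i; apply: Q_omega.
- by move=> j i; apply: N_omega.
Qed.
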